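(* Let $\epsilon$ be an inversion sequence to which Algorithm A (described below) is applied, and let $\epsilon'$ be the resulting sequence. If $i$ is a transient occurrence of $p$, then $\epsilon'_{i+2}\neq\epsilon'_i$.
   Context: An inversion sequence of length $n$ is an integer sequence with $0\le\epsilon_i<i$ for all $i$. The reduction of an integer word replaces each occurrence of its $k$-th smallest distinct value by $k-1$; a consecutive pattern $\underline{p_1p_2p_3p_4}$ occurs in a sequence at position $i$ if the reduction of its entries in positions $i,\dots,i+3$ equals $p_1p_2p_3p_4$. Let $p=\underline{0102}$ and $q=\underline{0112}$. Algorithm A, on input an integer sequence $\mathrm{seq}=\epsilon_1\cdots\epsilon_n$: let $E_p$, $E_q$ be the sets of positions of occurrences of $p$, resp. $q$, in the input sequence; set $\mathrm{last}:=$ null. For $i=1,2,\dots,n$ in order: let $N_p,N_q$ be the sets of positions of occurrences of $p$, resp. $q$, in the current sequence. If $i-2\in E_p$: set $\mathrm{last}:=\mathrm{seq}[i]$ and $\mathrm{seq}[i]:=\mathrm{seq}[i-1]$. Else if $i-2\in E_q$: set $\mathrm{last}:=\mathrm{seq}[i]$ and $\mathrm{seq}[i]:=\mathrm{seq}[i-2]$. Else if $i-2\in N_p$ or $i-2\in N_q$: swap the values of $\mathrm{seq}[i]$ and $\mathrm{last}$. Output $\mathrm{seq}$. With $\epsilon$ the input and $\epsilon'$ the output: position $i$ is an original occurrence of $p$ if $\epsilon_i=\epsilon_{i+2}$ and $\epsilon_i<\epsilon_{i+1}<\epsilon_{i+3}$; it is a transient occurrence of $p$ if it is not an original occurrence of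 $p$ but $\epsilon'_i=\epsilon_{i+2}$ and $\epsilon'_i<\epsilon_{i+1}<\epsilon_{i+3}$. *)

(* Defs.v *)
From mathcomp Require Import all_boot.
Set Implicit Arguments. Unset Strict Implicit. Unset Printing Implicit Defensive.

(* Sequences eps_1 ... eps_n are stored as [seq nat] (0-based storage);
   positions are 1-based as in the paper: [entry s i] is eps_i. *)
Definition entry (s : seq nat) (i : nat) : nat := nth 0 s i.-1.
Definition set_entry (s : seq nat) (i v : nat) : seq nat := set_nth 0 s i.-1 v.

Definition inversion_seq (s : seq nat) : bool :=
  all (fun i => entry s i < i) (iota 1 (size s)).

Definition reduction (w : seq nat) : seq nat :=
  map (fun x => size (undup (filter (fun y => y < x) w))) w.

Definition occurs (pat s : seq nat) (i : nat) : bool :=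
  [&& 1 <= i, i + 3 <= size s &
      reduction [:: entry s i; entry s i.+1; entry s i.+2; entry s i.+3] == pat].

Definition pat_p : seq nat := [:: 0; 1; 0; 2].
Definition pat_q : seq nat := [:: 0; 1; 1; 2].

(* One iteration (index i) of Algorithm A.  [inp] is the input sequence (used
   for E_p, E_q); the state is (current seq, last), with last = None for null.
   N_p, N_q are computed on the current sequence at the start of the iteration.
   A swap with a null [last] never happens in actual runs; we leave the state
   unchanged in that case. *)
Definition algA_step (inp : seq nat) (st : seq nat * option nat) (i : nat)
  : seq nat * option nat :=
  let: (cur, last) := st in
  if occurs pat_p inp (i - 2) then
    (set_entry cur i (entry cur i.-1), Some (entry cur i))
  else if occurs pat_q inp (i - 2) then
    (set_entry cur i (entry cur (i - 2)), Some (entry cur i))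
  else if occurs pat_p cur (i - 2) || occurs pat_q cur (i - 2) then
    match last with
    | Some l => (set_entry cur i l, Some (entry cur i))
    | None => (cur, last)
    end
  else (cur, last).

Definition algA (s : seq nat) : seq nat :=
  (foldl (algA_step s) (s, None) (iota 1 (size s))).1.

Definition original_occ_p (e : seq nat) (i : nat) : Prop :=
  entry e i = entry e i.+2 /\ entry e i < entry e i.+1 < entry e i.+3.

Definition transient_occ_p (e e' : seq nat) (i : nat) : Prop :=
  ~ original_occ_p e i /\
  entry e' i = entry e i.+2 /\ entry e' i < entry e i.+1 < entry e i.+3.

(* Main.v *)
Require Import Defs.
From mathcomp Require Import all_boot.
From mathcomp Require Import zify.

Definition red_at (w : seq nat) (x : nat) := size (undup (filter (fun y => y < x) w)).

Lemma red_mono w x y : x \in w -> x < y -> red_at w x < red_at w y.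
Proof.
move=> xw xy; rewrite /red_at.
have U : uniq (x :: undup (filter (fun z => z < x) w)).
  by rewrite /= undup_uniq mem_undup mem_filter ltnn.
have := uniq_leq_size U; apply => z; rewrite inE mem_undup mem_filter mem_undup mem_filter.
case/orP => [/eqP -> | /andP [zx zw]]; first by rewrite xy.
by rewrite zw (ltn_trans zx xy).
Qed.

Arguments red_mono {w x y}.

Lemma red_inj w x y : x \in w -> y \in w -> red_at w x = red_at w y -> x = y.
Proof.
move=> xw yw e; case: (ltngtP x y) => // h.
  by have := red_mono xw h; rewrite e ltnn.
by have := red_mono yw h; rewrite e ltnn.
Qed.

Arguments red_inj {w x y}.

Lemma red_lt w x y : x \in w -> y \in w -> red_at w x < red_at w y -> x < y.
Proof.
move=> xw yw h; case: (ltngtP x y) => // h'.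
  by have := red_mono yw h'; rewrite ltnNge (ltnW h).
by move: h; rewrite h' ltnn.
Qed.

Arguments red_lt {w x y}.

Lemma red4 a b c d : reduction [:: a; b; c; d] =
  [:: red_at [:: a; b; c; d] a; red_at [:: a; b; c; d] b;
      red_at [:: a; b; c; d] c; red_at [:: a; b; c; d] d].
Proof. by []. Qed.

Lemma occ_p s m : occurs pat_p s m ->
  [/\ 1 <= m, m + 3 <= size s, entry s m = entry s m.+2 &
      entry s m < entry s m.+1 < entry s m.+3].
Proof.
case/and3P => h1 h2; rewrite red4 => /eqP [ha hb hc hd].
set w := [:: _; _; _; _] in ha hb hc hd.
have i1 : entry s m \in w by rewrite !inE eqxx.
have i2 : entry s m.+1 \in w by rewrite !inE eqxx !orbT.
have i3 : entry s m.+2 \in w by rewrite !inE eqxx !orbT.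
have i4 : entry s m.+3 \in w by rewrite !inE eqxx !orbT.
split => //; first by apply: (red_inj (w:=w)) => //; rewrite ha hc.
apply/andP; split; apply: (red_lt (w:=w)) => //; rewrite ?ha ?hb ?hd //.
Qed.

Lemma occ_q s m : occurs pat_q s m ->
  [/\ 1 <= m, entry s m.+1 = entry s m.+2 & entry s m.+2 < entry s m.+3].
Proof.
case/and3P => h1 h2; rewrite red4 => /eqP [ha hb hc hd].
set w := [:: _; _; _; _] in ha hb hc hd.
have i2 : entry s m.+1 \in w by rewrite !inE eqxx !orbT.
have i3 : entry s m.+2 \in w by rewrite !inE eqxx !orbT.
have i4 : entry s m.+3 \in w by rewrite !inE eqxx !orbT.
split => //; first by apply: (red_inj (w:=w)) => //; rewrite  hb hc.
by apply: (red_lt (w:=w)) => //; rewrite hc hd.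
Qed.

Lemma no_occ s j : entry s j.+1 <= entry s j ->
  ~~ occurs pat_p s (j - 2) && ~~ occurs pat_q s (j - 2).
Proof.
move=> h; apply/andP; split; apply/negP.
  case/occ_p => h1 _ e1 /andP [e2 e3].
  have E2 : (j - 2).+2 = j by lia.
  have E3 : (j - 2).+3 = j.+1 by lia.
  rewrite E2 in e1; rewrite E3 in e3.
  move: (leq_trans e3 h); rewrite -e1 => e4.
  by move: (ltn_trans e2 e4); rewrite ltnn.
case/occ_q => h1 _.
have E2 : (j - 2).+2 = j by lia.
have E3 : (j - 2).+3 = j.+1 by lia.
by rewrite E2 ltnNge h.
Qed.

Lemma occ_p_intro s m : 1 <= m -> m + 3 <= size s ->
  entry s m = entry s m.+2 -> entry s m < entry s m.+1 -> entry s m.+1 < entry s m.+3 ->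
  occurs pat_p s m.
Proof.
move=> h1 h2 eac; set a := entry s m; set b := entry s m.+1; set d := entry s m.+3.
move=> ab bd.
rewrite /occurs h1 h2 -/a -/b -/d -eac /=.
have ad : a < d by apply: ltn_trans ab bd.
have f1 : (b < a) = false by apply/negbTE; rewrite -leqNgt ltnW.
have f2 : (d < a) = false by apply/negbTE; rewrite -leqNgt ltnW.
have f3 : (d < b) = false by apply/negbTE; rewrite -leqNgt ltnW.
have f4 : (b == a) = false by apply/negbTE; rewrite neq_ltn ab orbT.
rewrite /reduction /= !ltnn f1 f2 f3 ab bd ad /= !inE eqxx /= f4 /=.
by rewrite orbT.
Qed.

Arguments no_occ {s j}.

Section Alg.
Variable e : seq nat.
Local Notation step := (algA_step e).

Lemma step_other st j k : 1 <= j -> 1 <= k -> k != j ->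
  entry (step st j).1 k = entry st.1 k.
Proof.
move=> hj hk nkj.
have E : forall c v, entry (set_entry c j v) k = entry c k.
  move=> c v; rewrite /entry /set_entry nth_set_nth /=.
  have -> : (k.-1 == j.-1) = false by apply/negbTE; move: nkj; lia.
  by [].
case: st => c l; rewrite /algA_step.
case: ifP => _; first by rewrite /= E.
case: ifP => _; first by rewrite /= E.
case: ifP => _ //; case: l => // v; by rewrite /= E.
Qed.

Lemma step_size st j : size st.1 <= size (step st j).1.
Proof.
have E : forall c v, size c <= size (set_entry c j v).
  by move=> c v; rewrite /set_entry size_set_nth leq_maxr.
case: st => c l; rewrite /algA_step.
case: ifP => _; first by rewrite /= E.
case: ifP => _; first by rewrite /= E.
case: ifP => _ //; case: l => // v; by rewrite /= E.
Qed.

Lemma step_cases st j : step st j = st \/ (step st j).2 = Some (entry st.1 j).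
Proof.
case: st => c l; rewrite /algA_step.
case: ifP => _; first by right.
case: ifP => _; first by right.
case: ifP => _; last by left.
case: l => [v|]; [by right | by left].
Qed.

Lemma step_noop st j : ~~ occurs pat_p e (j - 2) -> ~~ occurs pat_q e (j - 2) ->
  ~~ occurs pat_p st.1 (j - 2) -> ~~ occurs pat_q st.1 (j - 2) -> step st j = st.
Proof.
case: st => c l /= /negbTE h1 /negbTE h2 /negbTE h3 /negbTE h4.
by rewrite /algA_step h1 h2 h3 h4.
Qed.

Lemma step_swap st j v : ~~ occurs pat_p e (j - 2) -> ~~ occurs pat_q e (j - 2) ->
  occurs pat_p st.1 (j - 2) -> st.2 = Some v ->
  step st j = (set_entry st.1 j v, Some (entry st.1 j)).
Proof.
case: st => c l /= /negbTE h1 /negbTE h2 h3 ->.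
by rewrite /algA_step h1 h2 h3.
Qed.

Lemma fold_other l st k : 1 <= k -> k \notin l -> all (fun j => 1 <= j) l ->
  entry (foldl step st l).1 k = entry st.1 k.
Proof.
elim: l st => //= j l IH st hk; rewrite inE negb_or => /andP [nkj nl] /andP [hj hl].
by rewrite IH // step_other.
Qed.

Lemma fold_size l st : size st.1 <= size (foldl step st l).1.
Proof.
elim: l st => //= j l IH st; exact: leq_trans (step_size st j) (IH _).
Qed.

End Alg.

Theorem lemma5 (e : seq nat) (i : nat) :
  inversion_seq e ->
  1 <= i -> i + 3 <= size e ->
  transient_occ_p e (algA e) i ->
  entry (algA e) i.+2 <> entry (algA e) i.
Proof.
move=> _ hi hn [norig [tr1 /andP [tr2 tr3]]].
set n := size e in hn.
have Hn : n = (i - 1) + (3 + (n - i - 2)) by lia.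
have Ealg : algA e = (foldl (algA_step e) (algA_step e (algA_step e (algA_step e
    (foldl (algA_step e) (e, None) (iota 1 (i - 1))) i) i.+1) i.+2) (iota (i + 3) (n - i - 2))).1.
  rewrite /algA -/n {1}Hn iotaD foldl_cat.
  have -> : 1 + (i - 1) = i by lia.
  by rewrite iotaD /= addn3.
set S0 := foldl _ _ (iota 1 _) in Ealg.
set S1 := algA_step e S0 i in Ealg.
set S2 := algA_step e S1 i.+1 in Ealg.
set S3 := algA_step e S2 i.+2 in Ealg.
have allp : forall a b, 1 <= a -> all (fun j => 1 <= j) (iota a b).
  move=> a b ha; apply/allP => j; rewrite mem_iota; lia.
have F3 : forall k, 1 <= k -> k <= i + 2 -> entry (algA e) k = entry S3.1 k.
  move=> k hk hk2; rewrite Ealg fold_other //.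
  - by apply/negP; rewrite mem_iota => /andP []; lia.
  - by apply: allp; lia.
have F0 : forall k, i <= k -> entry S0.1 k = entry e k.
  move=> k hk; rewrite /S0 fold_other //; first lia.
  - by apply/negP; rewrite mem_iota => /andP []; lia.
  - by apply: allp; lia.
have F1 : forall k, i < k -> entry S1.1 k = entry e k.
  by move=> k hk; rewrite /S1 step_other ?F0 //; lia.
have eS3i : entry S3.1 i = entry S1.1 i.
  rewrite /S3 step_other //; last by rewrite neq_ltn leqnSn.
  rewrite /S2 step_other //; by rewrite neq_ltn ltnSn.
rewrite F3 // in tr1 tr2 *; last by lia.
rewrite F3 //; last by lia.
rewrite eS3i in tr1 tr2 *.
have lt21 : entry e i.+2 < entry e i.+1 by rewrite -tr1.
have S1l : S1.2 = Some (entry e i).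
  case: (step_cases e S0 i); rewrite -/S1 => h; last by rewrite h F0.
  exfalso; apply: norig; move: tr1 tr2; rewrite h F0 // => t1 t2.
  by rewrite /original_occ_p t2 tr3 t1; split.
have S21 : S2 = S1.
  have h1 : entry e i.+2 <= entry e i.+1 by apply: ltnW.
  have h2 : entry S1.1 i.+2 <= entry S1.1 i.+1 by rewrite !F1.
  case/andP: (no_occ h1) => a1 a2; case/andP: (no_occ h2) => a3 a4.
  exact: step_noop.
have m2 : i.+2 - 2 = i by lia.
have sz : i + 3 <= size S2.1.
  apply: (leq_trans hn); rewrite /n.
  apply: (leq_trans (fold_size e (iota 1 (i - 1)) (e, None))).
  rewrite -/S0; apply: (leq_trans (step_size e S0 i)).
  by rewrite -/S1 -S21.
have S3e : S3 = (set_entry S2.1 i.+2 (entry e i), Some (entry S2.1 i.+2)).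
  apply: step_swap; rewrite ?m2.
  - apply/negP => /occ_p [_ _ h /andP [h' h'']]; apply: norig; split => //.
    by rewrite h' h''.
  - apply/negP => /occ_q [_ h _]; by move: lt21; rewrite h ltnn.
  - apply: occ_p_intro => //; rewrite S21.
    + by rewrite tr1 F1.
    + by rewrite (F1 i.+1).
    + rewrite (F1 i.+1) ?(F1 i.+3) //; lia.
  - by rewrite S21 S1l.
rewrite S3e /= /entry /set_entry nth_set_nth /= eqxx -/(entry _ _). rewrite -/(entry S1.1 i) tr1 => E.
apply: norig; split => //; by rewrite E -tr1 tr2 tr3.
Qed.
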